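(* In the standing setup, fix $\varepsilon>0$ and let $\Sigma$ be the set of subsequences $\alpha=(\alpha_n)$ of $(p_n)$ such that $\ell_n^\alpha<\frac1{12}\frac{\varepsilon}{4^n}$ for all $n$. Define $\xi:\Sigma\to\mathbb R$ by $\xi(\alpha)=\lim_{n\to\infty}\alpha_0\alpha_1\cdots\alpha_n(\infty)$ (this limit exists and is a positive real number). Then the image $\xi(\Sigma)$ is uncountable.
   Context: Standing setup: $\mathbb H$ is the upper half-plane, $\partial\mathbb H=\mathbb R\cup\{\infty\}$; for $v\in T^1\mathbb H$, $v(t)$ is the unit-speed geodesic with initial vector $v$, $v(+\infty)$ its forward endpoint. For a horocycle $\tilde H$ and a parabolic isometry $p$ preserving it, $\ell(\tilde H,p)$ is the horocyclic arc length between $x$ and $px$ ($x\in\tilde H$); positive orientation is that of an arc-length parametrization with $p\tilde H(s)=\tilde H(s+\ell(\tilde H,p))$; $\tilde u$ is tangent to the oriented pair $(\tilde H,p)$ if $\tilde u(\mathbb R^+)$ is tangent to $\tilde H$ at $\tilde u(t_0)=\tilde H(s_0)$, $t_0\ge0$, with $\frac{d\tilde u}{dt}(t_0)=\frac{d\tilde H}{ds}(s_0)$ for a positively oriented parametrization. $\Gamma$ is a torsion-free Fuchsian group, $S=\Gamma\backslash\mathbb H$ has at least one cusp, $u\in T^1S$ is cusp-recurrent with lift $\tilde u$ normalized so that $\tilde u(0)=i$, $\tilde u(+\infty)=\infty$. $(\tilde H_n,p_n)_{n\in\mathbb N}$: $p_n\in\Gamma$ parabolic with fixed point $x_n\in\mathbb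 R$, $\tilde H_n$ horocycle centered at $x_n$, $\tilde u$ tangent to the oriented pair $(\tilde H_n,p_n)$ at $\tilde u(t_n)$, $(t_n)$ nonnegative increasing to $+\infty$, $x_n$ positive distinct increasing to $+\infty$, horoballs bounded by the $\tilde H_n$ pairwise disjoint, $\ell(\tilde H_n,p_n)\to0$. A subsequence $\alpha$ is $\alpha_n=p_{k_n}$ ($k_n$ strictly increasing), $\ell_n^\alpha=\ell(\tilde H_{k_n},p_{k_n})$. *)

(* Defs.v *)
From Stdlib Require Import Reals.
From Coquelicot Require Import Coquelicot.
Open Scope R_scope.

Record Mat := mkMat { ma : R; mb : R; mc : R; md : R }.

Definition mat_mul (M N : Mat) : Mat :=
  mkMat (ma M * ma N + mb M * mc N) (ma M * mb N + mb M * md N)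
        (mc M * ma N + md M * mc N) (mc M * mb N + md M * md N).
Definition mat_id : Mat := mkMat 1 0 0 1.
Definition mat_opp (M : Mat) : Mat := mkMat (- ma M) (- mb M) (- mc M) (- md M).
Definition mat_inv (M : Mat) : Mat := mkMat (md M) (- mb M) (- mc M) (ma M).
Fixpoint mat_pow (M : Mat) (k : nat) : Mat :=
  match k with O => mat_id | S k' => mat_mul M (mat_pow M k') end.
Definition det (M : Mat) : R := ma M * md M - mb M * mc M.

(* g is trivial in PSL(2,R) *)
Definition is_pm_id (g : Mat) : Prop := g = mat_id \/ g = mat_opp mat_id.

(* Gamma : a set of SL(2,R) matrices, closed under -I, forming a group:
   it is the preimage of a subgroup of PSL(2,R). *)
Definition SL2_group (G : Mat -> Prop) : Prop :=
  (forall g, G g -> det g = 1) /\ G mat_id /\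
  (forall g h, G g -> G h -> G (mat_mul g h)) /\
  (forall g, G g -> G (mat_inv g)) /\
  (forall g, G g -> G (mat_opp g)).

(* discreteness: the identity of PSL(2,R) is isolated in the image of G *)
Definition discrete_group (G : Mat -> Prop) : Prop :=
  exists e, 0 < e /\ forall g, G g -> ~ is_pm_id g ->
    ~ (Rabs (ma g - 1) < e /\ Rabs (mb g) < e /\ Rabs (mc g) < e /\ Rabs (md g - 1) < e).

Definition Fuchsian (G : Mat -> Prop) : Prop := SL2_group G /\ discrete_group G.

Definition torsion_free (G : Mat -> Prop) : Prop :=
  forall g k, G g -> (1 <= k)%nat -> is_pm_id (mat_pow g k) -> is_pm_id g.

Definition parabolic (g : Mat) : Prop :=
  det g = 1 /\ Rabs (ma g + md g) = 2 /\ ~ is_pm_id g.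

Definition fixes_real (g : Mat) (x : R) : Prop :=
  mc g * x + md g <> 0 /\ (ma g * x + mb g) / (mc g * x + md g) = x.

Definition mobius (g : Mat) (z : C) : C :=
  Cdiv (Cplus (Cmult (RtoC (ma g)) z) (RtoC (mb g)))
       (Cplus (Cmult (RtoC (mc g)) z) (RtoC (md g))).

(* the lift u~ : u~(t) = i e^t, unit speed vertical geodesic, u~(0)=i, u~(+oo)=oo *)
Definition ugeod (t : R) : C := (0, exp t).
Definition ugeod_vel (t : R) : C := (0, exp t).

(* The horocycle centered at x in R of Euclidean diameter D > 0 is the circle
   |z - (x + i D/2)| = D/2 minus the point x. The map
      s |-> x - D/(s+i)
   is a unit-hyperbolic-speed (arc-length) parametrization of it; every arc
   length parametrization is of the form s |-> hpar x D (sigma*s + c),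
   sigma = 1 or -1. *)
Definition hpar (x D : R) (s : R) : C :=
  Cminus (RtoC x) (Cdiv (RtoC D) (Cplus (RtoC s) Ci)).

Definition oriented_param (x D sigma : R) (s : R) : C := hpar x D (sigma * s).

(* sigma gives the positive orientation of the oriented pair (H(x,D), p), and
   l > 0 is the horocyclic length l(H,p): p H(s) = H(s + l). *)
Definition pos_orient (x D : R) (p : Mat) (sigma l : R) : Prop :=
  (sigma = 1 \/ sigma = -1) /\ 0 < l /\
  forall s, mobius p (oriented_param x D sigma s) = oriented_param x D sigma (s + l).

Definition horo_length (x D : R) (p : Mat) (l : R) : Prop :=
  exists sigma, pos_orient x D p sigma l.

Definition tangent_at (x D : R) (p : Mat) (t : R) : Prop :=
  0 <= t /\
  exists sigma l s0, pos_orient x D p sigma l /\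
    oriented_param x D sigma s0 = ugeod t /\
    is_derive (oriented_param x D sigma) s0 (ugeod_vel t).

Definition horoball (x D : R) (z : C) : Prop :=
  0 < Im z /\ (Re z - x) ^ 2 + (Im z - D / 2) ^ 2 < (D / 2) ^ 2.

Definition strictly_incr (k : nat -> nat) : Prop := forall n, (k n < k (S n))%nat.

(* alpha_0 alpha_1 ... alpha_n, with alpha_j = p (k j) *)
Fixpoint sub_prod (p : nat -> Mat) (k : nat -> nat) (n : nat) : Mat :=
  match n with
  | O => p (k O)
  | S n' => mat_mul (sub_prod p k n') (p (k (S n')))
  end.

(* M(oo) = a/c when c <> 0 (and oo when c = 0).  The sequence of boundary points
   M_n(oo) converges to the real number L iff eventually c_n <> 0 and a_n/c_n -> L. *)
Definition orbit_inf_conv (M : nat -> Mat) (L : R) : Prop :=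
  (exists N, forall n, (N <= n)%nat -> mc (M n) <> 0) /\
  is_lim_seq (fun n => ma (M n) / mc (M n)) L.

Definition countable_set (A : R -> Prop) : Prop :=
  exists f : nat -> R, forall y, A y -> exists n, f n = y.

(* Main.v *)
Require Import Defs.
From Stdlib Require Import Reals.
From Coquelicot Require Import Coquelicot.
Open Scope R_scope.

From Stdlib Require Import Lra Lia Psatz ClassicalEpsilon.

Definition Pm (x tau : R) : Mat := mkMat (1 + tau * x) (- (tau * x ^ 2)) tau (1 - tau * x).
Definition isP (p : Mat) (x tau : R) : Prop := p = Pm x tau \/ p = mat_opp (Pm x tau).

Lemma hpar_eq x D v : hpar x D v = (x - D * v / (v ^ 2 + 1), D / (v ^ 2 + 1)).
Proof.
  assert (v ^ 2 + 1 <> 0) by nra.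
  unfold hpar, Cminus, Cdiv, Cplus, Cmult, Cinv, Copp, RtoC, Ci; simpl.
  f_equal; field; nra.
Qed.

Lemma snd_derive (f : R -> C) s l :
  is_derive f s l -> is_derive (fun y => snd (f y)) s (snd l).
Proof.
  intro H. unfold is_derive in *.
  eapply filterdiff_ext_lin.
  - apply (filterdiff_comp f (fun t : C => snd t) _ (fun t : C => snd t) H).
    apply filterdiff_linear, is_linear_snd.
  - intros y. reflexivity.
Qed.

Lemma sigma_neg x D t sigma s0 : 0 < x -> 0 < D ->
  (sigma = 1 \/ sigma = -1) ->
  oriented_param x D sigma s0 = ugeod t ->
  is_derive (oriented_param x D sigma) s0 (ugeod_vel t) -> sigma = -1.
Proof.
  intros Hx HD Hs Hpt Hd.
  destruct Hs as [-> | ->]; [exfalso | reflexivity].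
  apply snd_derive in Hd.
  unfold oriented_param in Hpt.
  rewrite hpar_eq in Hpt. unfold ugeod in Hpt. injection Hpt as H1 H2.
  assert (E : is_derive (fun y => D / ((1 * y) ^ 2 + 1)) s0
             (- (2 * D * s0) / (s0 ^ 2 + 1) ^ 2)).
  { auto_derive. nra. field. nra. }
  assert (E2 : is_derive (fun y : R => snd (oriented_param x D 1 y)) s0
             (- (2 * D * s0) / (s0 ^ 2 + 1) ^ 2)).
  { eapply is_derive_ext; [|exact E]. intros y; unfold oriented_param; rewrite hpar_eq; reflexivity. }
  apply is_derive_unique in Hd. apply is_derive_unique in E2.
  assert (E3 : snd (ugeod_vel t) = - (2 * D * s0) / (s0 ^ 2 + 1) ^ 2).
  { rewrite <- E2. symmetry. etransitivity; [|exact Hd]. reflexivity. }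
  clear E2 Hd E. rename E3 into E2. unfold ugeod_vel in E2; cbn [snd] in E2.
  replace (1 * s0) with s0 in H1 by ring.
  assert (Hs0 : 0 < s0).
  { assert (s0 ^ 2 + 1 > 0) by nra.
    assert (Hq : D * s0 / (s0 ^ 2 + 1) = x) by (replace (s0^2) with (s0*(s0*1)) by ring; lra).
    assert (D * s0 = x * (s0 ^ 2 + 1)) by (rewrite <- Hq; field; lra).
    nra. }
  pose proof (exp_pos t).
  assert (s0 ^ 2 + 1 > 0) by nra.
  assert (- (2 * D * s0) / (s0 ^ 2 + 1) ^ 2 < 0).
  { unfold Rdiv.
    assert (0 < / (s0 ^ 2 + 1) ^ 2) by (apply Rinv_0_lt_compat; nra).
    assert (0 < D * s0) by nra.
    assert (0 < (D * s0) * / (s0 ^ 2 + 1) ^ 2) by nra.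
    nra. }
  lra.
Qed.

Lemma para_form p x : parabolic p -> fixes_real p x ->
  exists tau, isP p x tau.
Proof.
  destruct p as [a b c d]. unfold parabolic, fixes_real, det, isP, Pm, mat_opp; simpl.
  intros [Hdet [Htr _]] [Hden Hfix].
  assert (Hb : b = x * (c * x + d) - a * x).
  { assert (a * x + b = x * (c * x + d)).
    { rewrite <- Hfix at 2. field. exact Hden. }
    lra. }
  destruct (Rcase_abs (a + d)) as [Hn|Hp].
  - rewrite Rabs_left in Htr by lra.
    assert (Hd : d = -2 - a) by lra.
    assert (Hsq : (a + 1 - c * x) ^ 2 = 0).
    { subst b d. nra. }
    assert (Hsq0 : a + 1 - c * x = 0 \/ a - 1 - c * x = 0) by (left; nra) || (right; nra).
    exists (- c). right. subst b d. f_equal; nra.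
  - rewrite Rabs_right in Htr by lra.
    assert (Hd : d = 2 - a) by lra.
    assert (Hsq : (a - 1 - c * x) ^ 2 = 0).
    { subst b d. nra. }
    assert (Hsq0 : a + 1 - c * x = 0 \/ a - 1 - c * x = 0) by (left; nra) || (right; nra).
    exists c. left. subst b d. f_equal; nra.
Qed.

Lemma mobius_fst a b c d X Y : (c * X + d) ^ 2 + (c * Y) ^ 2 <> 0 ->
  fst (mobius (mkMat a b c d) (X, Y)) =
  ((a * X + b) * (c * X + d) + a * c * Y ^ 2) / ((c * X + d) ^ 2 + (c * Y) ^ 2).
Proof.
  intro H.
  unfold mobius, Cdiv, Cplus, Cmult, Cinv, RtoC; simpl.
  field. contradict H. nra.
Qed.

Lemma tau_pos x D p tau l : 0 < D ->
  isP p x tau -> pos_orient x D p (-1) l -> 0 < tau.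
Proof.
  intros HD HP [_ [Hl Heq]].
  specialize (Heq 0).
  unfold oriented_param in Heq.
  rewrite !hpar_eq in Heq.
  replace (x - D * (-1 * 0) / ((-1 * 0) ^ 2 + 1), D / ((-1 * 0) ^ 2 + 1)) with (x, D) in Heq
    by (f_equal; field).
  apply (f_equal fst) in Heq. cbn [fst] in Heq.
  assert (Hden : 1 + (tau * D) ^ 2 <> 0) by nra.
  assert (Hm : fst (mobius p (x, D)) = x + tau * D ^ 2 / (1 + (tau * D) ^ 2)).
  { destruct HP as [-> | ->]; unfold Pm, mat_opp; rewrite mobius_fst; cbn [ma mb mc md].
    - field. nra.
    - replace ((tau * x + (1 - tau * x)) ^ 2 + (tau * D) ^ 2) with (1 + (tau * D) ^ 2) by ring. exact Hden.
    - field. nra.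
    - cbn [ma mb mc md]. replace ((- tau * x + - (1 - tau * x)) ^ 2 + (- tau * D) ^ 2) with (1 + (tau * D) ^ 2) by ring. exact Hden. }
  rewrite Hm in Heq.
  replace (-1 * (0 + l)) with (- l) in Heq by ring.
  assert (Hl2 : (- l) ^ 2 + 1 > 0) by nra.
  assert (HQ : tau * D ^ 2 / (1 + (tau * D) ^ 2) = D * l / ((- l) ^ 2 + 1)) by lra.
  assert (0 < D * l / ((- l) ^ 2 + 1)).
  { apply Rdiv_lt_0_compat; nra. }
  assert (0 < tau * D ^ 2 / (1 + (tau * D) ^ 2)) by lra.
  assert (0 < tau * D ^ 2).
  { assert (1 + (tau * D) ^ 2 > 0) by nra.
    replace (tau * D ^ 2) with (tau * D ^ 2 / (1 + (tau * D) ^ 2) * (1 + (tau * D) ^ 2)) by (field; lra).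
    nra. }
  nra.
Qed.

Lemma geo p x D t : 0 < x -> 0 < D -> parabolic p -> fixes_real p x ->
  tangent_at x D p t -> exists tau, 0 < tau /\ isP p x tau.
Proof.
  intros Hx HD Hpar Hfix [_ [sigma [l [s0 [Hpos [Hpt Hd]]]]]].
  destruct (para_form p x Hpar Hfix) as [tau HP].
  assert (sigma = -1).
  { apply (sigma_neg x D t sigma s0); auto. destruct Hpos as [Hs _]; exact Hs. }
  subst sigma. exists tau. split; auto.
  eapply tau_pos; eauto.
Qed.

Definition ev (M : Mat) (z : R) : R := (ma M * z + mb M) / (mc M * z + md M).
Definition fj (x tau z : R) : R := x + (z - x) / (1 + tau * (z - x)).

Lemma ev_isP p x tau z : isP p x tau -> 0 < tau -> x < z ->
  mc p * z + md p <> 0 /\ ev p z = fj x tau z.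
Proof.
  intros HP Ht Hz. assert (0 < tau * (z - x)) by nra.
  unfold ev, fj; destruct HP as [-> | ->]; unfold Pm, mat_opp; cbn [ma mb mc md]; split.
  - nra.
  - field. nra.
  - nra.
  - field. nra.
Qed.

Lemma ratio_isP p x tau : isP p x tau -> 0 < tau ->
  mc p <> 0 /\ ma p / mc p = x + / tau.
Proof.
  intros HP Ht.
  destruct HP as [-> | ->]; unfold Pm, mat_opp; cbn [ma mb mc md]; split;
    try lra; field; lra.
Qed.

Lemma fj_gt x tau z : 0 < tau -> x < z -> x < fj x tau z.
Proof.
  intros. unfold fj. assert (0 < tau * (z - x)) by nra.
  assert (0 < (z - x) / (1 + tau * (z - x))) by (apply Rdiv_lt_0_compat; lra). lra.
Qed.

Lemma fj_lt x tau z : 0 < tau -> x < z -> fj x tau z < x + / tau.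
Proof.
  intros. unfold fj. assert (0 < tau * (z - x)) by nra.
  replace (x + (z - x) / (1 + tau * (z - x))) with
    (x + / tau - / (tau * (1 + tau * (z - x)))) by (field; lra).
  assert (0 < / (tau * (1 + tau * (z - x)))) by (apply Rinv_0_lt_compat; nra). lra.
Qed.

Lemma fj_mono x tau z1 z2 : 0 < tau -> x < z1 -> z1 < z2 -> fj x tau z1 < fj x tau z2.
Proof.
  intros. unfold fj.
  assert (0 < tau * (z1 - x)) by nra. assert (0 < tau * (z2 - x)) by nra.
  assert ((z1 - x) / (1 + tau * (z1 - x)) < (z2 - x) / (1 + tau * (z2 - x))).
  { apply Rminus_gt_0_lt.
    replace ((z2 - x) / (1 + tau * (z2 - x)) - (z1 - x) / (1 + tau * (z1 - x)))
      with ((z2 - z1) / ((1 + tau * (z2 - x)) * (1 + tau * (z1 - x)))) by (field; lra).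
    apply Rdiv_lt_0_compat; nra. }
  lra.
Qed.

Lemma fj_big x tau del z : 0 < tau -> 0 < del -> x + / (del * tau ^ 2) <= z ->
  x + / tau - del < fj x tau z.
Proof.
  intros Ht Hd Hz.
  assert (Ht2 : 0 < tau ^ 2) by (apply pow_lt; lra).
  assert (0 < / (del * tau ^ 2)) by (apply Rinv_0_lt_compat, Rmult_lt_0_compat; lra).
  assert (z - x > 0) by lra.
  assert (0 < tau * (z - x)) by nra.
  unfold fj.
  replace (x + (z - x) / (1 + tau * (z - x))) with
    (x + / tau - / (tau * (1 + tau * (z - x)))) by (field; lra).
  assert (/ (tau * (1 + tau * (z - x))) < del); [|lra].
  assert (Hq : del * tau ^ 2 * (z - x) >= 1).
  { assert (z - x >= / (del * tau ^ 2)) by lra.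
    assert (del * tau ^ 2 > 0) by nra.
    replace 1 with (del * tau ^ 2 * / (del * tau ^ 2)) by (field; lra).
    apply Rle_ge, Rmult_le_compat_l; lra. }
  apply (Rmult_lt_reg_r (tau * (1 + tau * (z - x)))); [nra|].
  rewrite Rinv_l by nra. nra.
Qed.

Lemma ev_mul M N z : mc N * z + md N <> 0 -> mc M * ev N z + md M <> 0 ->
  mc (mat_mul M N) * z + md (mat_mul M N) <> 0 /\ ev (mat_mul M N) z = ev M (ev N z).
Proof.
  intros H1 H2. unfold ev in *. unfold mat_mul; cbn [ma mb mc md].
  assert (E : (mc M * ma N + md M * mc N) * z + (mc M * mb N + md M * md N) =
     (mc M * ((ma N * z + mb N) / (mc N * z + md N)) + md M) * (mc N * z + md N))
     by (field; repeat split; auto).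
  split.
  - rewrite E. apply Rmult_integral_contrapositive; auto.
  - rewrite E.
    assert (H3 : mc M * (ma N * z + mb N) + md M * (mc N * z + md N) <> 0).
    { replace (mc M * (ma N * z + mb N) + md M * (mc N * z + md N)) with
        ((mc M * ((ma N * z + mb N) / (mc N * z + md N)) + md M) * (mc N * z + md N))
        by (field; auto).
      apply Rmult_integral_contrapositive; auto. }
    field. repeat split; auto.
Qed.

Lemma ratio_mul M N : mc N <> 0 -> mc M * (ma N / mc N) + md M <> 0 ->
  mc (mat_mul M N) <> 0 /\ ma (mat_mul M N) / mc (mat_mul M N) = ev M (ma N / mc N).
Proof.
  intros H1 H2. unfold ev in *. unfold mat_mul; cbn [ma mb mc md].
  assert (E : mc M * ma N + md M * mc N = (mc M * (ma N / mc N) + md M) * mc N)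
    by (field; repeat split; auto).
  assert (H3 : mc M * ma N + md M * mc N <> 0).
  { rewrite E. apply Rmult_integral_contrapositive; auto. }
  split.
  - rewrite E. apply Rmult_integral_contrapositive; auto.
  - rewrite E. field. repeat split; auto.
Qed.

Definition Hf (p : nat -> Mat) (k : nat -> nat) (n : nat) (z : R) : R :=
  match n with O => z | S m => ev (sub_prod p k m) z end.

Definition lbH (x : nat -> R) (k : nat -> nat) (n : nat) (z : R) : Prop :=
  match n with O => True | S m => x (k m) < z end.

Lemma x_mono (x : nat -> R) : (forall n, x n < x (S n)) -> forall i j, (i < j)%nat -> x i < x j.
Proof.
  intros Hx i j Hij. induction Hij.
  - apply Hx.
  - specialize (Hx m). lra.
Qed.

Lemma k_mono k : strictly_incr k -> forall i j, (i < j)%nat -> (k i < k j)%nat.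
Proof.
  intros Hk i j Hij. induction Hij.
  - apply Hk.
  - specialize (Hk m). lia.
Qed.

Definition good (p : nat -> Mat) (x tau : nat -> R) : Prop :=
  (forall n, isP (p n) (x n) (tau n)) /\ (forall n, 0 < tau n) /\ (forall n, x n < x (S n)).

Lemma xk_mono x k : (forall n, x n < x (S n)) -> strictly_incr k ->
  forall i j, (i < j)%nat -> x (k i) < x (k j).
Proof. intros Hx Hk i j Hij. apply (x_mono x Hx). apply (k_mono k Hk). exact Hij. Qed.

Lemma core_ev p x tau k : good p x tau -> strictly_incr k -> forall m,
  (forall z, x (k m) < z ->
     mc (sub_prod p k m) * z + md (sub_prod p k m) <> 0 /\
     ev (sub_prod p k m) z = Hf p k m (fj (x (k m)) (tau (k m)) z)) /\
  (forall z1 z2, x (k m) < z1 -> z1 < z2 -> ev (sub_prod p k m) z1 < ev (sub_prod p k m) z2).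
Proof.
  intros [Hp [Ht Hx]] Hk. induction m as [|m [IH1 IH2]].
  - simpl. split.
    + intros z Hz. exact (ev_isP _ _ _ z (Hp _) (Ht _) Hz).
    + intros z1 z2 H1 H2.
      rewrite (proj2 (ev_isP _ _ _ z1 (Hp _) (Ht _) H1)).
      assert (H3 : x (k 0%nat) < z2) by lra. rewrite (proj2 (ev_isP _ _ _ z2 (Hp _) (Ht _) H3)).
      apply fj_mono; auto.
  - assert (Hxx : x (k m) < x (k (S m))) by (apply (xk_mono x k Hx Hk); lia).
    cbn [sub_prod]. split.
    + intros z Hz.
      destruct (ev_isP _ _ _ z (Hp (k (S m))) (Ht _) Hz) as [D1 E1].
      pose proof (fj_gt (x (k (S m))) (tau (k (S m))) z (Ht _) Hz) as G1.
      destruct (IH1 (fj (x (k (S m))) (tau (k (S m))) z) ltac:(lra)) as [D2 _].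
      rewrite <- E1 in D2.
      destruct (ev_mul _ _ _ D1 D2) as [D3 E3].
      split; auto. rewrite E3, E1. reflexivity.
    + intros z1 z2 H1 H2.
      destruct (ev_isP _ _ _ z1 (Hp (k (S m))) (Ht _) H1) as [D1 E1].
      destruct (ev_isP _ _ _ z2 (Hp (k (S m))) (Ht _) ltac:(lra)) as [D1' E1'].
      pose proof (fj_gt (x (k (S m))) (tau (k (S m))) z1 (Ht _) H1) as G1.
      pose proof (fj_mono (x (k (S m))) (tau (k (S m))) z1 z2 (Ht _) H1 H2) as G2.
      destruct (IH1 (fj (x (k (S m))) (tau (k (S m))) z1) ltac:(lra)) as [D2 _].
      destruct (IH1 (fj (x (k (S m))) (tau (k (S m))) z2) ltac:(lra)) as [D2' _].
      rewrite <- E1 in D2. rewrite <- E1' in D2'.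
      rewrite (proj2 (ev_mul _ _ _ D1 D2)), (proj2 (ev_mul _ _ _ D1' D2')), E1, E1'.
      apply IH2; lra.
Qed.

Lemma H_mono p x tau k : good p x tau -> strictly_incr k -> forall n z1 z2,
  lbH x k n z1 -> z1 < z2 -> Hf p k n z1 < Hf p k n z2.
Proof.
  intros G Hk [|m] z1 z2 Hl H12; simpl; auto.
  apply (proj2 (core_ev p x tau k G Hk m)); auto.
Qed.

Lemma lbH_of p x tau k : good p x tau -> strictly_incr k -> forall n z,
  x (k n) < z -> lbH x k n z.
Proof.
  intros [_ [_ Hx]] Hk [|m] z Hz; simpl; auto.
  assert (x (k m) < x (k (S m))) by (apply (xk_mono x k Hx Hk); lia). lra.
Qed.

Lemma H_step p x tau k : good p x tau -> strictly_incr k -> forall n z,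
  x (k n) < z -> Hf p k (S n) z = Hf p k n (fj (x (k n)) (tau (k n)) z).
Proof.
  intros G Hk n z Hz. simpl.
  exact (proj2 (proj1 (core_ev p x tau k G Hk n) z Hz)).
Qed.

Definition yv (p : nat -> Mat) (k : nat -> nat) (m : nat) : R :=
  ma (sub_prod p k m) / mc (sub_prod p k m).

Lemma ratio p x tau k : good p x tau -> strictly_incr k -> forall n,
  mc (sub_prod p k n) <> 0 /\ yv p k n = Hf p k n (x (k n) + / tau (k n)).
Proof.
  intros G Hk. pose proof G as [Hp [Ht Hx]]. unfold yv. intros [|n].
  - simpl. exact (ratio_isP _ _ _ (Hp _) (Ht _)).
  - cbn [sub_prod].
    destruct (ratio_isP _ _ _ (Hp (k (S n))) (Ht (k (S n)))) as [D1 E1].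
    assert (Hxx : x (k n) < x (k (S n))) by (apply (xk_mono x k Hx Hk); lia).
    assert (0 < / tau (k (S n))) by (apply Rinv_0_lt_compat; auto).
    destruct (proj1 (core_ev p x tau k G Hk n) (x (k (S n)) + / tau (k (S n)))
       ltac:(lra)) as [D2 _].
    rewrite <- E1 in D2.
    destruct (ratio_mul _ _ D1 D2) as [D3 E3].
    split; auto. rewrite E3, E1. reflexivity.
Qed.

Lemma tail p x tau k : good p x tau -> strictly_incr k -> forall (n d : nat) z,
  x (k (n + d)%nat) < z -> exists w, x (k n) < w /\ Hf p k (n + d)%nat z = Hf p k n w.
Proof.
  intros G Hk n d. pose proof G as [Hp [Ht Hx]]. induction d as [|d IH]; intros z Hz.
  - rewrite Nat.add_0_r in *. exists z; auto.
  - rewrite Nat.add_succ_r in *.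
    rewrite (H_step p x tau k G Hk (n + d)%nat z); [|
      assert (x (k (n + d)%nat) < x (k (S (n + d)))) by (apply (xk_mono x k Hx Hk); lia); lra].
    apply IH.
    apply fj_gt; auto.
    assert (x (k (n + d)%nat) < x (k (S (n + d)))) by (apply (xk_mono x k Hx Hk); lia); lra.
Qed.

Lemma interval p x tau k : good p x tau -> strictly_incr k -> forall n m, (S n <= m)%nat ->
  Hf p k n (fj (x (k n)) (tau (k n)) (x (k (S n)))) < yv p k m /\
  yv p k m < Hf p k n (x (k n) + / tau (k n)).
Proof.
  intros G Hk n m Hm. pose proof G as [Hp [Ht Hx]].
  destruct (ratio p x tau k G Hk m) as [_ Ey]. rewrite Ey.
  replace m with (S n + (m - S n))%nat by lia.
  assert (0 < / tau (k (S n + (m - S n))%nat)) by (apply Rinv_0_lt_compat; auto).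
  destruct (tail p x tau k G Hk (S n) (m - S n) (x (k (S n + (m - S n))%nat) + / tau (k (S n + (m - S n))%nat)) ltac:(lra))
    as [w [Hw Ew]].
  rewrite Ew.
  assert (Hxx : x (k n) < x (k (S n))) by (apply (xk_mono x k Hx Hk); lia).
  rewrite (H_step p x tau k G Hk n w) by lra.
  pose proof (fj_mono (x (k n)) (tau (k n)) (x (k (S n))) w (Ht _) Hxx Hw) as F1.
  pose proof (fj_lt (x (k n)) (tau (k n)) w (Ht _) ltac:(lra)) as F2.
  pose proof (fj_gt (x (k n)) (tau (k n)) (x (k (S n))) (Ht _) Hxx) as F3.
  split.
  - apply (H_mono p x tau k G Hk); auto. apply (lbH_of p x tau k G Hk). exact F3.
  - apply (H_mono p x tau k G Hk); auto. apply (lbH_of p x tau k G Hk). lra.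
Qed.

Lemma lim_bounds p x tau k L : good p x tau -> strictly_incr k ->
  orbit_inf_conv (sub_prod p k) L -> forall n,
  Hf p k n (fj (x (k n)) (tau (k n)) (x (k (S n)))) <= L /\
  L <= Hf p k n (x (k n) + / tau (k n)).
Proof.
  intros G Hk [_ HL] n.
  pose proof (interval p x tau k G Hk n) as I.
  split.
  - assert (Rbar_le (Hf p k n (fj (x (k n)) (tau (k n)) (x (k (S n))))) L); [|exact H].
    apply (is_lim_seq_le_loc (fun _ => Hf p k n (fj (x (k n)) (tau (k n)) (x (k (S n))))) (yv p k)).
    + exists (S n). intros m Hm. left. apply (I m Hm).
    + apply is_lim_seq_const.
    + exact HL.
  - assert (Rbar_le L (Hf p k n (x (k n) + / tau (k n)))); [|exact H].
    apply (is_lim_seq_le_loc (yv p k) (fun _ => Hf p k n (x (k n) + / tau (k n)))).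
    + exists (S n). intros m Hm. left. apply (I m Hm).
    + exact HL.
    + apply is_lim_seq_const.
Qed.

Lemma part1 p x tau k : good p x tau -> (forall n, 0 < x n) -> strictly_incr k ->
  exists L, 0 < L /\ orbit_inf_conv (sub_prod p k) L.
Proof.
  intros G Hx0 Hk. pose proof G as [Hp [Ht Hx]].
  assert (Hdec : Un_decreasing (yv p k)).
  { intro n. destruct (interval p x tau k G Hk n (S n) (le_n _)) as [_ U].
    destruct (ratio p x tau k G Hk n) as [_ E]. rewrite E. lra. }
  assert (Hpos : forall m, 0 < yv p k m).
  { intros [|m].
    - destruct (ratio p x tau k G Hk 0) as [_ E]. rewrite E. simpl.
      assert (0 < / tau (k 0%nat)) by (apply Rinv_0_lt_compat; auto).
      specialize (Hx0 (k 0%nat)). lra.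
    - destruct (interval p x tau k G Hk 0 (S m) ltac:(lia)) as [Lo _].
      simpl in Lo.
      assert (x (k 0%nat) < x (k 1%nat)) by (apply (xk_mono x k Hx Hk); lia).
      pose proof (fj_gt (x (k 0%nat)) (tau (k 0%nat)) (x (k 1%nat)) (Ht _) H).
      specialize (Hx0 (k 0%nat)). lra. }
  assert (Hlb : has_lb (yv p k)).
  { exists 0. intros z [i ->]. specialize (Hpos i). unfold opp_seq. lra. }
  destruct (decreasing_cv _ Hdec Hlb) as [L HL].
  apply is_lim_seq_Reals in HL.
  assert (Hoc : orbit_inf_conv (sub_prod p k) L).
  { split.
    - exists 0%nat. intros n _. apply (ratio p x tau k G Hk n).
    - exact HL. }
  exists L. split; auto.
  destruct (lim_bounds p x tau k L G Hk Hoc 0) as [Lo _]. simpl in Lo.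
  assert (x (k 0%nat) < x (k 1%nat)) by (apply (xk_mono x k Hx Hk); lia).
  pose proof (fj_gt (x (k 0%nat)) (tau (k 0%nat)) (x (k 1%nat)) (Ht _) H).
  specialize (Hx0 (k 0%nat)). lra.
Qed.

Lemma sel_ex (ell x bnd : nat -> R) : is_lim_seq ell 0 -> is_lim_seq x p_infty ->
  (forall n, 0 < bnd n) ->
  forall n M X, exists j, (M < j)%nat /\ X < x j /\ ell j < bnd n.
Proof.
  intros He Hx Hb n M X.
  apply is_lim_seq_spec in He. apply is_lim_seq_spec in Hx.
  destruct (He (mkposreal _ (Hb n))) as [N1 H1].
  destruct (Hx X) as [N2 H2].
  exists (S (M + N1 + N2)). split; [lia|]. split.
  - apply H2. lia.
  - specialize (H1 (S (M + N1 + N2)) ltac:(lia)). simpl in H1.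
    apply Rabs_lt_between in H1. lra.
Qed.

Fixpoint j0f (sel : nat -> nat -> R -> nat) (x tau : nat -> R) (n : nat) : nat :=
  match n with
  | O => sel O O 0
  | S n' => let a := j0f sel x tau n' in
            let b := sel n' a (x a + / tau a) in
            sel (S n') b (x b + / ((x b + / tau b - (x a + / tau a)) * tau b ^ 2))
  end.

Definition j1f (sel : nat -> nat -> R -> nat) (x tau : nat -> R) (n : nat) : nat :=
  let a := j0f sel x tau n in sel n a (x a + / tau a).

Definition kb (sel : nat -> nat -> R -> nat) (x tau : nat -> R) (b : nat -> bool) (n : nat) : nat :=
  if b n then j1f sel x tau n else j0f sel x tau n.

Lemma x_le (x : nat -> R) : (forall n, x n < x (S n)) -> forall i j, (i <= j)%nat -> x i <= x j.
Proof.
  intros Hx i j H. destruct (Nat.eq_dec i j) as [->|Hn]; [lra|].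
  left. apply (x_mono x Hx). lia.
Qed.

Lemma sub_prod_ext p k k' m : (forall i, (i <= m)%nat -> k i = k' i) ->
  sub_prod p k m = sub_prod p k' m.
Proof.
  induction m; intros H; simpl.
  - rewrite H; auto.
  - rewrite IHm by (intros; apply H; lia). rewrite H; auto.
Qed.

Lemma Hf_ext p k k' n z : (forall i, (i < n)%nat -> k i = k' i) -> Hf p k n z = Hf p k' n z.
Proof.
  destruct n as [|m]; intros H; simpl; auto.
  rewrite (sub_prod_ext p k k' m); auto. intros; apply H; lia.
Qed.


Definition Cc (x tau : nat -> R) (j : nat) : R := x j + / tau j.

Lemma tree_props sel (x tau ell bnd : nat -> R) :
  (forall n M X, (M < sel n M X)%nat /\ X < x (sel n M X) /\ ell (sel n M X) < bnd n) ->
  forall n,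
  let a := j0f sel x tau n in let b := j1f sel x tau n in
  (a < b)%nat /\ Cc x tau a < x b /\ (b < j0f sel x tau (S n))%nat /\
  x b + / ((Cc x tau b - Cc x tau a) * tau b ^ 2) < x (j0f sel x tau (S n)) /\
  ell a < bnd n /\ ell b < bnd n.
Proof.
  intros Hsel n a b.
  assert (Ha : ell a < bnd n).
  { unfold a. destruct n; simpl; apply Hsel. }
  destruct (Hsel n a (x a + / tau a)) as [B1 [B2 B3]].
  destruct (Hsel (S n) b (x b + / ((x b + / tau b - (x a + / tau a)) * tau b ^ 2)))
    as [C1 [C2 C3]].
  unfold Cc. simpl. fold a. unfold j1f in b. fold a in b. fold b.
  repeat split; auto.
Qed.

Lemma kb_facts sel (x tau ell bnd : nat -> R) (b : nat -> bool) :
  (forall n M X, (M < sel n M X)%nat /\ X < x (sel n M X) /\ ell (sel n M X) < bnd n) ->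
  (forall n, (j0f sel x tau n <= kb sel x tau b n)%nat /\ (kb sel x tau b n <= j1f sel x tau n)%nat) /\
  strictly_incr (kb sel x tau b) /\ (forall n, ell (kb sel x tau b n) < bnd n).
Proof.
  intros Hsel.
  assert (H1 : forall n, (j0f sel x tau n <= kb sel x tau b n)%nat /\ (kb sel x tau b n <= j1f sel x tau n)%nat).
  { intro n. destruct (tree_props sel x tau ell bnd Hsel n) as [T1 _].
    unfold kb. destruct (b n); lia. }
  split; [exact H1|]. split.
  - intro n. destruct (tree_props sel x tau ell bnd Hsel n) as [_ [_ [T3 _]]].
    pose proof (H1 n). pose proof (H1 (S n)). lia.
  - intro n. destruct (tree_props sel x tau ell bnd Hsel n) as [_ [_ [_ [_ [T5 T6]]]]].
    unfold kb. destruct (b n); auto.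
Qed.

Lemma sep sel p (x tau ell bnd : nat -> R) (b b' : nat -> bool) n L L' :
  good p x tau ->
  (forall n M X, (M < sel n M X)%nat /\ X < x (sel n M X) /\ ell (sel n M X) < bnd n) ->
  (forall i, (i < n)%nat -> b i = b' i) -> b n = false -> b' n = true ->
  orbit_inf_conv (sub_prod p (kb sel x tau b)) L ->
  orbit_inf_conv (sub_prod p (kb sel x tau b')) L' -> L < L'.
Proof.
  intros G Hsel Hpre Hbn Hbn' HL HL'.
  pose proof G as [Hp [Ht Hx]].
  destruct (kb_facts sel x tau ell bnd b Hsel) as [K1 [K2 _]].
  destruct (kb_facts sel x tau ell bnd b' Hsel) as [K1' [K2' _]].
  set (k := kb sel x tau b) in *. set (k' := kb sel x tau b') in *.
  set (a := j0f sel x tau n). set (c := j1f sel x tau n).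
  assert (Eka : k n = a) by (unfold k, kb; rewrite Hbn; reflexivity).
  assert (Ekc : k' n = c) by (unfold k', kb; rewrite Hbn'; reflexivity).
  destruct (tree_props sel x tau ell bnd Hsel n) as [T1 [T2 [T3 [T4 _]]]].
  fold a c in T1, T2, T3, T4.
  destruct (lim_bounds p x tau k L G K2 HL n) as [_ UL].
  destruct (lim_bounds p x tau k' L' G K2' HL' n) as [LL' _].
  rewrite Eka in UL. rewrite Ekc in LL'.
  assert (Hext : forall z, Hf p k n z = Hf p k' n z).
  { intro z. apply Hf_ext. intros i Hi. unfold k, k', kb. rewrite (Hpre i Hi). reflexivity. }
  rewrite Hext in UL.
  assert (Hnext : x (j0f sel x tau (S n)) <= x (k' (S n))).
  { apply (x_le x Hx). apply K1'. }
  assert (Hdel : 0 < Cc x tau c - Cc x tau a).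
  { unfold Cc in *. assert (0 < / tau c) by (apply Rinv_0_lt_compat; auto). lra. }
  assert (Hf1 : Cc x tau c - (Cc x tau c - Cc x tau a) <
                fj (x c) (tau c) (x (k' (S n)))).
  { unfold Cc at 1. apply fj_big; auto. lra. }
  replace (Cc x tau c - (Cc x tau c - Cc x tau a)) with (Cc x tau a) in Hf1 by ring.
  assert (Hlb : lbH x k' n (Cc x tau a)).
  { destruct n as [|m]; simpl; auto.
    destruct (K1' m) as [_ Km].
    destruct (tree_props sel x tau ell bnd Hsel m) as [_ [_ [T3m _]]].
    assert (x (k' m) < x a).
    { apply (x_mono x Hx). unfold a. lia. }
    unfold Cc. assert (0 < / tau a) by (apply Rinv_0_lt_compat; auto). lra. }
  pose proof (H_mono p x tau k' G K2' n _ _ Hlb Hf1).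
  unfold Cc in *. lra.
Qed.

Lemma inj sel p (x tau ell bnd : nat -> R) (b b' : nat -> bool) L :
  good p x tau ->
  (forall n M X, (M < sel n M X)%nat /\ X < x (sel n M X) /\ ell (sel n M X) < bnd n) ->
  orbit_inf_conv (sub_prod p (kb sel x tau b)) L ->
  orbit_inf_conv (sub_prod p (kb sel x tau b')) L -> forall n, b n = b' n.
Proof.
  intros G Hsel HL HL'.
  assert (A : forall n i, (i <= n)%nat -> b i = b' i).
  { induction n as [|n IH]; intros i Hi.
    - assert (i = 0%nat) by lia. subst i.
      destruct (b 0%nat) eqn:E1, (b' 0%nat) eqn:E2; auto; exfalso.
      + pose proof (sep sel p x tau ell bnd b' b 0 L L G Hsel ltac:(intros; lia) E2 E1 HL' HL). lra.
      + pose proof (sep sel p x tau ell bnd b b' 0 L L G Hsel ltac:(intros; lia) E1 E2 HL HL'). lra.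
    - destruct (Nat.eq_dec i (S n)) as [->|Hne]; [|apply IH; lia].
      assert (Hpre : forall j, (j < S n)%nat -> b j = b' j) by (intros; apply IH; lia).
      destruct (b (S n)) eqn:E1, (b' (S n)) eqn:E2; auto; exfalso.
      + pose proof (sep sel p x tau ell bnd b' b (S n) L L G Hsel ltac:(intros; symmetry; auto) E2 E1 HL' HL). lra.
      + pose proof (sep sel p x tau ell bnd b b' (S n) L L G Hsel Hpre E1 E2 HL HL'). lra. }
  intro n. apply (A n n). lia.
Qed.

Lemma part2 p (x tau ell bnd : nat -> R) : good p x tau -> (forall n, 0 < x n) ->
  is_lim_seq ell 0 -> is_lim_seq x p_infty -> (forall n, 0 < bnd n) ->
  ~ countable_set (fun L => exists k, (strictly_incr k /\ forall n, ell (k n) < bnd n) /\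
                                   orbit_inf_conv (sub_prod p k) L).
Proof.
  intros G Hx0 He Hxl Hb [e He'].
  pose proof (sel_ex ell x bnd He Hxl Hb) as Hs.
  set (sel := fun n M X => proj1_sig (constructive_indefinite_description _ (Hs n M X))).
  assert (Hsel : forall n M X, (M < sel n M X)%nat /\ X < x (sel n M X) /\ ell (sel n M X) < bnd n).
  { intros. unfold sel. exact (proj2_sig (constructive_indefinite_description _ (Hs n M X))). }
  set (B := fun m : nat =>
    match excluded_middle_informative
            (exists b : nat -> bool, orbit_inf_conv (sub_prod p (kb sel x tau b)) (e m)) with
    | left H => proj1_sig (constructive_indefinite_description _ H)
    | right _ => fun _ => false
    end).
  set (bs := fun m => negb (B m m)).
  destruct (kb_facts sel x tau ell bnd bs Hsel) as [_ [K2 K3]].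
  destruct (part1 p x tau (kb sel x tau bs) G Hx0 K2) as [L [_ HL]].
  destruct (He' L) as [m Em].
  { exists (kb sel x tau bs). split; auto. }
  assert (Hex : exists b : nat -> bool, orbit_inf_conv (sub_prod p (kb sel x tau b)) (e m)).
  { exists bs. rewrite Em. exact HL. }
  assert (HB : orbit_inf_conv (sub_prod p (kb sel x tau (B m))) (e m)).
  { unfold B. destruct (excluded_middle_informative _) as [H|H].
    - exact (proj2_sig (constructive_indefinite_description _ H)).
    - contradiction. }
  rewrite Em in HB.
  pose proof (inj sel p x tau ell bnd (B m) bs L G Hsel HB HL m) as Q.
  unfold bs in Q. destruct (B m m); discriminate.
Qed.

Theorem mainTheorem11
  (Gamma : Mat -> Prop) (p : nat -> Mat) (x D t ell : nat -> R) (eps : R) :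
  Fuchsian Gamma -> torsion_free Gamma ->
  (forall n, Gamma (p n)) ->
  (forall n, parabolic (p n)) ->
  (forall n, fixes_real (p n) (x n)) ->
  (forall n, 0 < x n) ->
  (forall n, x n < x (S n)) ->
  is_lim_seq x p_infty ->
  (forall n, 0 < D n) ->
  (forall n m, n <> m -> forall z, ~ (horoball (x n) (D n) z /\ horoball (x m) (D m) z)) ->
  (forall n, 0 <= t n) ->
  (forall n, t n <= t (S n)) ->
  is_lim_seq t p_infty ->
  (forall n, tangent_at (x n) (D n) (p n) (t n)) ->
  (forall n, horo_length (x n) (D n) (p n) (ell n)) ->
  is_lim_seq ell 0 ->
  0 < eps ->
  let Sigma := fun k : nat -> nat =>
    strictly_incr k /\ forall n, ell (k n) < / 12 * (eps / 4 ^ n) in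
  (forall k, Sigma k -> exists L, 0 < L /\ orbit_inf_conv (sub_prod p k) L) /\
  ~ countable_set (fun L => exists k, Sigma k /\ orbit_inf_conv (sub_prod p k) L).
Proof.
  intros _ _ _ Hpar Hfix Hx0 Hx Hxl HD _ _ _ _ Htan _ Hell Heps Sigma.
  assert (Hg : forall n, exists tau, 0 < tau /\ isP (p n) (x n) tau).
  { intro n. apply (geo (p n) (x n) (D n) (t n)); auto. }
  set (tau := fun n => proj1_sig (constructive_indefinite_description _ (Hg n))).
  assert (Htau : forall n, 0 < tau n /\ isP (p n) (x n) (tau n)).
  { intro n. unfold tau. exact (proj2_sig (constructive_indefinite_description _ (Hg n))). }
  assert (G : good p x tau).
  { split; [|split]; auto; intro n; apply Htau. }
  split.
  - intros k [Hk _]. exact (part1 p x tau k G Hx0 Hk).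
  - apply (part2 p x tau ell (fun n => / 12 * (eps / 4 ^ n)) G Hx0 Hell Hxl).
    intro n. apply Rmult_lt_0_compat; [lra|].
    apply Rdiv_lt_0_compat; auto. apply pow_lt; lra.
Qed.
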